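(* Let $X,Y,Z\in\mathbb{Z}[i]$ satisfy $X^2+iY^2=Z^2$, $\gcd(X,Y)\in U$, $XYZ\neq0$, with $X,Z\in O^I$ and $Y=(1+i)^2W$, $W\in G$. Then there exist an integer $t$, $0\le t\le3$, and $P,Q\in G$ with $\gcd(P,Q)=1$ such that $$X=i^{t+1}\big(P^2-(-1)^t iQ^2\big),\quad Y=(1+i)^2PQ,\quad Z=i^{t+1}\big(P^2+(-1)^t iQ^2\big).$$
   Context: $\mathbb{Z}[i]$ is the ring of Gaussian integers, $U=\{1,-1,i,-i\}$ its unit group; $R(\alpha),I(\alpha)$ are real and imaginary parts. $\gcd(x,y)\in U$ means no common non-unit divisor; for $P,Q\in G$, $\gcd(P,Q)=1$ means no common prime factor. $O=\{\alpha: R(\alpha)+I(\alpha)\equiv1\pmod 2\}$, $O^I=\{\alpha\in O: R(\alpha)\equiv 1\pmod 4\}$. $G$ is the set of Gaussian integers $(1+i)^{a_1}p_2^{a_2}\cdots p_m^{a_m}$ with integers $a_j\ge0$ and $p_j$ distinct Gaussian primes in $O^I$. *)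

(* Defs.v *)
From HB Require Import structures.
From mathcomp Require Import all_boot all_order all_algebra all_field.
Set Implicit Arguments. Unset Strict Implicit. Unset Printing Implicit Defensive.
Import Order.TTheory GRing.Theory Num.Theory.
Local Open Scope ring_scope.

Definition gaussInt (z : algC) : bool :=
  ('Re z \is a Num.int) && ('Im z \is a Num.int).

Definition gdvd (x y : algC) : Prop :=
  exists2 k : algC, gaussInt k & y = x * k.

Definition inU (z : algC) : bool := z \in [:: 1; -1; 'i; - 'i].

Definition gprime (p : algC) : Prop :=
  [/\ gaussInt p, p != 0, ~~ inU p &
      forall a b : algC, gaussInt a -> gaussInt b -> p = a * b -> inU a \/ inU b].

Definition gcd_unit (x y : algC) : Prop :=
  forall d : algC, gaussInt d -> gdvd d x -> gdvd d y -> inU d.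

Definition gcoprime (P Q : algC) : Prop :=
  forall p : algC, gprime p -> ~ (gdvd p P /\ gdvd p Q).

Definition inO (z : algC) : bool :=
  gaussInt z && (('Re z + 'Im z - 1) / 2%:R \is a Num.int).

Definition inOI (z : algC) : bool :=
  inO z && (('Re z - 1) / 4%:R \is a Num.int).

Definition inG (z : algC) : Prop :=
  exists (a : nat) (ps : seq algC) (es : seq nat),
    [/\ size es = size ps, uniq ps,
        (forall p, p \in ps -> gprime p /\ inOI p) &
        z = (1 + 'i) ^+ a * \prod_(j < size ps) ps`_j ^+ nth 0%N es j].

(* Main.v *)
Require Import Defs.
From HB Require Import structures.
From mathcomp Require Import all_boot all_order all_algebra all_field.
From mathcomp Require Import zify ring.
Import Order.TTheory GRing.Theory Num.Theory.
Local Open Scope ring_scope.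
Set Implicit Arguments. Unset Strict Implicit.

Definition gi (a b : int) : algC := a%:~R + 'i * b%:~R.

Lemma intr_real (a : int) : (a%:~R : algC) \is Num.real.
Proof. exact: Rreal_int (intr_int _ _). Qed.

Lemma Re_gi a b : 'Re (gi a b) = a%:~R.
Proof. by rewrite /gi Re_rect ?intr_real. Qed.
Lemma Im_gi a b : 'Im (gi a b) = b%:~R.
Proof. by rewrite /gi Im_rect ?intr_real. Qed.

Lemma gi_inj a b c d : gi a b = gi c d -> a = c /\ b = d.
Proof.
move=> e; have := Re_gi a b; have := Im_gi a b; rewrite e Re_gi Im_gi.
by move=> /intr_inj <- /intr_inj <-.
Qed.

Lemma gaussP z : reflect (exists a b, z = gi a b) (gaussInt z).
Proof.
apply: (iffP andP) => [[/intrP[a ea] /intrP[b eb]]|[a [b ->]]].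
  by exists a, b; rewrite /gi -ea -eb -Crect.
by rewrite Re_gi Im_gi !intr_int.
Qed.

Lemma gi_add a b c d : gi a b + gi c d = gi (a + c) (b + d).
Proof. rewrite /gi !rmorphD /=; ring. Qed.
Lemma gi_opp a b : - gi a b = gi (- a) (- b).
Proof. rewrite /gi !rmorphN /=; ring. Qed.
Lemma gi_mul a b c d : gi a b * gi c d = gi (a * c - b * d) (a * d + b * c).
Proof. rewrite /gi mulC_rect !rmorphB !rmorphD !rmorphM /=; ring. Qed.
Lemma gi_norm a b : `|gi a b| ^+ 2 = (a ^+ 2 + b ^+ 2)%:~R.
Proof. by rewrite /gi normC2_rect ?intr_real // rmorphD !rmorphXn. Qed.
Lemma gi1 : gi 1 0 = 1. Proof. by rewrite /gi mulr0 addr0. Qed.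
Lemma gi0 : gi 0 0 = 0. Proof. by rewrite /gi mulr0 addr0. Qed.
Lemma giI : gi 0 1 = 'i. Proof. by rewrite /gi mulr1 add0r. Qed.

Lemma gauss_add x y : gaussInt x -> gaussInt y -> gaussInt (x + y).
Proof. by move=> /gaussP[a[b->]] /gaussP[c[d->]]; apply/gaussP; rewrite gi_add; eauto. Qed.
Lemma gauss_opp x : gaussInt x -> gaussInt (- x).
Proof. by move=> /gaussP[a[b->]]; apply/gaussP; rewrite gi_opp; eauto. Qed.
Lemma gauss_sub x y : gaussInt x -> gaussInt y -> gaussInt (x - y).
Proof. by move=> gx gy; apply: gauss_add => //; apply: gauss_opp. Qed.
Lemma gauss_mul x y : gaussInt x -> gaussInt y -> gaussInt (x * y).
Proof. by move=> /gaussP[a[b->]] /gaussP[c[d->]]; apply/gaussP; rewrite gi_mul; eauto. Qed.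
Lemma gauss0 : gaussInt 0. Proof. by apply/gaussP; rewrite -gi0; eauto. Qed.
Lemma gauss1 : gaussInt 1. Proof. by apply/gaussP; rewrite -gi1; eauto. Qed.
Lemma gaussI : gaussInt 'i. Proof. by apply/gaussP; rewrite -giI; eauto. Qed.
Lemma gauss_exp x n : gaussInt x -> gaussInt (x ^+ n).
Proof. by move=> gx; elim: n => [|n IH]; rewrite ?expr0 ?gauss1 // exprS gauss_mul. Qed.
Lemma norm1_unit (a b : int) : a ^+ 2 + b ^+ 2 = 1 -> inU (gi a b).
Proof.
move=> h.
have : (a = 1 /\ b = 0) \/ (a = -1 /\ b = 0) \/ (a = 0 /\ b = 1) \/ (a = 0 /\ b = -1) by nia.
rewrite /inU !inE.
case=> [[-> ->]|[[-> ->]|[[-> ->]|[-> ->]]]].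
- by rewrite gi1 eqxx.
- by rewrite (_ : gi (-1) 0 = -1) ?eqxx ?orbT // -gi1 gi_opp oppr0.
- by rewrite giI eqxx !orbT.
- by rewrite (_ : gi 0 (-1) = -'i) ?eqxx ?orbT // -giI gi_opp oppr0.
Qed.
Lemma prod1 (n1 n2 : int) : n1 * n2 = 1 -> 0 <= n1 -> 0 <= n2 -> n1 = 1.
Proof.
move=> h p1 p2.
have q1 : n1 != 0 by apply/eqP=> e; move: h; rewrite e mul0r.
have q2 : n2 != 0 by apply/eqP=> e; move: h; rewrite e mulr0.
nia. Qed.

Lemma sq_ge0 (a b : int) : 0 <= a ^+ 2 + b ^+ 2.
Proof. by rewrite addr_ge0 // exprn_even_ge0. Qed.

Lemma unit_mul1 k m : gaussInt k -> gaussInt m -> k * m = 1 -> inU k.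
Proof.
move=> /gaussP[a[b->]] /gaussP[c[d->]]; rewrite gi_mul -gi1 => /gi_inj[h1 h2].
apply: norm1_unit.
have h : (a ^+ 2 + b ^+ 2) * (c ^+ 2 + d ^+ 2) = 1.
  by rewrite -[1](_ : 1 ^+ 2 + 0 ^+ 2 = 1) // -h1 -h2; ring.
exact: prod1 h (sq_ge0 _ _) (sq_ge0 _ _).
Qed.

Lemma inU_cases u : inU u -> [\/ u = 1, u = -1, u = 'i | u = -'i].
Proof. by rewrite /inU !inE => /or4P[] /eqP ->; constructor. Qed.

Lemma inU_gauss u : inU u -> gaussInt u.
Proof.
case/inU_cases=> ->; rewrite ?gauss1 ?gaussI ?gauss_opp ?gauss1 ?gaussI //.
Qed.

Lemma sqrI : 'i * 'i = -1 :> algC.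
Proof. by rewrite -expr2 sqrCi. Qed.

Lemma inU_inv u : inU u -> exists2 v, inU v & u * v = 1.
Proof.
case/inU_cases=> ->.
- by exists 1; rewrite ?mulr1 // /inU !inE eqxx.
- by exists (-1); rewrite ?mulrNN ?mulr1 // /inU !inE eqxx orbT.
- by exists (-'i); rewrite ?mulrN ?sqrI ?opprK // /inU !inE eqxx !orbT.
- by exists 'i; rewrite ?mulNr ?sqrI ?opprK // /inU !inE eqxx !orbT.
Qed.

Lemma inU_neq0 u : inU u -> u != 0.
Proof. by case/inU_inv=> v _ e; apply/eqP=> u0; move: e; rewrite u0 mul0r => /eqP; rewrite eq_sym oner_eq0. Qed.

Lemma inU_mul u v : inU u -> inU v -> inU (u * v).
Proof.
move=> hu hv; case: (inU_inv hu) => u' hu' e1; case: (inU_inv hv) => v' hv' e2.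
apply: (@unit_mul1 _ (u' * v')); rewrite ?gauss_mul ?inU_gauss //.
by rewrite mulrACA e1 e2 mulr1.
Qed.

Lemma gdvd_refl x : gdvd x x.
Proof. by exists 1; rewrite ?gauss1 ?mulr1. Qed.
Lemma gdvd_trans x y z : gdvd x y -> gdvd y z -> gdvd x z.
Proof. move=> [k gk ->] [l gl ->]; exists (k * l); rewrite ?gauss_mul ?mulrA //. Qed.
Lemma gdvd_mulr x y z : gaussInt z -> gdvd x y -> gdvd x (y * z).
Proof. move=> gz [k gk ->]; exists (k * z); rewrite ?gauss_mul ?mulrA //. Qed.
Lemma gdvd_mull x y z : gaussInt z -> gdvd x y -> gdvd x (z * y).
Proof. by move=> gz h; rewrite mulrC; apply: gdvd_mulr. Qed.
Lemma gdvd_add x y z : gdvd x y -> gdvd x z -> gdvd x (y + z).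
Proof. move=> [k gk ->] [l gl ->]; exists (k + l); rewrite ?gauss_add ?mulrDr //. Qed.
Lemma gdvd_opp x y : gdvd x y -> gdvd x (- y).
Proof. move=> [k gk ->]; exists (- k); rewrite ?gauss_opp ?mulrN //. Qed.
Lemma gdvd_sub x y z : gdvd x y -> gdvd x z -> gdvd x (y - z).
Proof. by move=> h1 h2; apply: gdvd_add => //; apply: gdvd_opp. Qed.
Lemma gdvd0 x : gdvd x 0.
Proof. by exists 0; rewrite ?gauss0 ?mulr0. Qed.
Lemma gdvd_mul2 x y : gaussInt y -> gdvd x (x * y).
Proof. by move=> gy; exists y. Qed.
Lemma round_near (s N : int) : 0 < N -> exists q, (2 * (s - q * N)) ^+ 2 <= N ^+ 2.
Proof.
move=> N0; exists ((2 * s + N) %/ (2 * N))%Z.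
have := divz_eq (2 * s + N) (2 * N).
have := modz_ge0 (2 * s + N) (_ : 2 * N != 0); have := ltz_pmod (2 * s + N) (_ : 0 < 2 * N).
move: ((2 * s + N) %/ (2 * N))%Z ((2 * s + N) %% (2 * N))%Z => q r.
move=> h1 h2 h3.
have e : 2 * (s - q * N) = r - N by rewrite mulrBr; lia.
rewrite e; move: h1 h2 N0; clear; move: r N => r N h1 h2 N0.
rewrite !expr2. nia.
Unshelve. all: lia.
Qed.

Lemma eucl_int (a b c d : int) : 0 < c ^+ 2 + d ^+ 2 -> exists q1 q2 : int,
  (a - (q1 * c - q2 * d)) ^+ 2 + (b - (q1 * d + q2 * c)) ^+ 2 < c ^+ 2 + d ^+ 2.
Proof.
move=> N0; set N := c ^+ 2 + d ^+ 2.
have NN : 0 < N := N0.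
have [q1 h1] := @round_near (a * c + b * d) N NN.
have [q2 h2] := @round_near (b * c - a * d) N NN.
exists q1, q2.
set E := _ + _.
have id : E * N = (a * c + b * d - q1 * N) ^+ 2 + (b * c - a * d - q2 * N) ^+ 2.
  rewrite /E /N; ring.
have E0 : 0 <= E by rewrite /E addr_ge0 // exprn_even_ge0.
set A := (a * c + b * d - q1 * N) in h1 id; set B := (b * c - a * d - q2 * N) in h2 id.
clearbody A B E N; clear -h1 h2 id E0 NN.
rewrite !exprMn_comm in h1 h2; try exact: mulrC.
rewrite !expr2 in h1 h2 id.
have h3 : 2 * (E * N) <= N * N by lia.
clear -h3 E0 NN.
nia.
Qed.

Definition bez g x y := exists2 u, gaussInt u & exists2 v, gaussInt v & g = u * x + v * y.

Lemma bezout x y : gaussInt x -> gaussInt y -> exists g,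
  [/\ gaussInt g, bez g x y, gdvd g x & gdvd g y].
Proof.
move=> gx /gaussP[c [d ->]].
suff: forall n : nat, forall c d : int, c ^+ 2 + d ^+ 2 < n%:Z -> forall x, gaussInt x ->
  exists g, [/\ gaussInt g, bez g x (gi c d), gdvd g x & gdvd g (gi c d)].
  move=> /(_ (absz (c ^+ 2 + d ^+ 2)).+1 c d); apply => //.
  have := sq_ge0 c d; lia.
clear; elim=> [|n IH] c d hn x gx; first by have := sq_ge0 c d; lia.
have [N0|N0] := eqVneq (c ^+ 2 + d ^+ 2) 0.
  have [-> ->] : c = 0 /\ d = 0 by nia.
  exists x; rewrite gi0; split; [exact: gx| |exact: gdvd_refl|exact: gdvd0].
  by exists 1; rewrite ?gauss1 //; exists 0; rewrite ?gauss0 // mul1r mulr0 addr0.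
have /gaussP[a [b ex]] := gx.
have Np : 0 < c ^+ 2 + d ^+ 2 by have := sq_ge0 c d; rewrite le_eqVlt eq_sym (negbTE N0).
have [q1 [q2 hq]] := @eucl_int a b c d Np.
set e := a - _ in hq; set f := b - _ in hq.
have hxr : x = gi q1 q2 * gi c d + gi e f.
  by rewrite ex gi_mul gi_add /e /f; congr gi; ring.
have hn' : e ^+ 2 + f ^+ 2 < n%:Z by move: hn hq; lia.
have gy : gaussInt (gi c d) by apply/gaussP; eauto.
have [g [gg [u gu [v gv eg]] dgy dgr]] := IH e f hn' (gi c d) gy.
have gq : gaussInt (gi q1 q2) by apply/gaussP; eauto.
have gr : gaussInt (gi e f) by apply/gaussP; eauto.
exists g; split => //.
- exists v => //; exists (u - v * gi q1 q2); first by rewrite gauss_sub ?gauss_mul.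
  by rewrite eg hxr; ring.
- by rewrite hxr; apply: gdvd_add => //; apply: gdvd_mull.
Qed.

Lemma euclid p a b : gprime p -> gaussInt a -> gaussInt b -> gdvd p (a * b) ->
  gdvd p a \/ gdvd p b.
Proof.
move=> [gp p0 pnu pirr] ga gb pab.
have [g [gg [u gu [v gv eg]] [k gk ep] dga]] := bezout gp ga.
case: (pirr g k gg gk ep) => [ug|uk].
- right; have [g' ug' e'] := inU_inv ug.
  have -> : b = g' * (u * (p * b) + v * (a * b)).
    by rewrite !mulrA -mulrDl -eg mulrA [g' * g]mulrC e' mul1r.
  apply: gdvd_mull; first exact: inU_gauss.
  apply: gdvd_add; apply: gdvd_mull => //; exact: gdvd_mul2.
- left; have [k' uk' e'] := inU_inv uk.
  apply: (gdvd_trans _ dga).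
  rewrite (_ : g = p * k'); first exact/gdvd_mul2/inU_gauss.
  by rewrite ep -mulrA e' mulr1.
Qed.

Lemma gdvd_cancel q x y : q != 0 -> gdvd (q * x) (q * y) -> gdvd x y.
Proof. by move=> q0 [k gk e]; exists k => //; apply: (mulfI q0); rewrite e mulrA. Qed.

Lemma gdvd_gauss x y : gaussInt x -> gdvd x y -> gaussInt y.
Proof. by move=> gx [k gk ->]; apply: gauss_mul. Qed.

Lemma gprime_neq0 p : gprime p -> p != 0. Proof. by case. Qed.
Lemma gprime_gauss p : gprime p -> gaussInt p. Proof. by case. Qed.

Lemma euclid_pow q A B n : gprime q -> gaussInt A -> gaussInt B -> ~ gdvd q A ->
  gdvd (q ^+ n) (A * B) -> gdvd (q ^+ n) B.
Proof.
move=> pq gA; elim: n B => [|n IH] B gB nqA.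
  by move=> _; rewrite expr0; exists B; rewrite ?mul1r.
move=> h.
have qAB : gdvd q (A * B) by apply: gdvd_trans h; rewrite exprS; apply/gdvd_mul2/gauss_exp/gprime_gauss.
case: (euclid pq gA gB qAB) => // -[B' gB' eB].
have : gdvd (q ^+ n) B'.
  apply: IH => //; apply: (@gdvd_cancel q); first exact: gprime_neq0.
  by rewrite -exprS mulrCA -eB.
by move=> [m gm eB']; exists m; rewrite // eB eB' exprS mulrA.
Qed.

Lemma gprime_ndvd_unit p u : gprime p -> inU u -> ~ gdvd p u.
Proof.
move=> pp uu [k gk e]; have [u' gu' e'] := inU_inv uu.
case: pp => gp _ np _; apply: (negP np); apply: (@unit_mul1 _ (k * u')).
- exact: gp.
- by apply: gauss_mul => //; apply: inU_gauss.
- by rewrite mulrA -e.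
Qed.

Definition gcop A B := forall p, gprime p -> gdvd p A -> gdvd p B -> False.

Lemma gcop_sym A B : gcop A B -> gcop B A.
Proof. by move=> h p pp h1 h2; apply: (h p pp). Qed.

Lemma gcop_dvdr A B B' : gcop A B -> gdvd B' B -> gcop A B'.
Proof. by move=> h dB p pp h1 h2; apply: (h p pp h1); apply: gdvd_trans dB. Qed.

Lemma gauss_prod (I : Type) (r : seq I) (P : pred I) (F : I -> algC) :
  (forall i, P i -> gaussInt (F i)) -> gaussInt (\prod_(i <- r | P i) F i).
Proof.
move=> h; apply: (big_ind (fun x => gaussInt x)); first exact: gauss1.
  exact: gauss_mul.
exact: h.
Qed.

Lemma absorb q k A B c R : gprime q -> gaussInt A -> gaussInt B -> gaussInt R -> inU c ->
  gcop A B -> gdvd q B -> A * B = c * (q ^+ (2 * k) * R) ->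
  exists2 B', gaussInt B' & B = q ^+ (2 * k) * B' /\ A * B' = c * R.
Proof.
move=> pq gA gB gR uc cop qB e.
have nqA : ~ gdvd q A by move=> qA; apply: (cop q pq qA qB).
have q0 : q ^+ (2 * k) != 0 by rewrite expf_neq0 // gprime_neq0.
have : gdvd (q ^+ (2 * k)) B.
  apply: (euclid_pow pq gA gB nqA); rewrite e mulrCA; apply: gdvd_mul2.
  by apply: gauss_mul => //; apply: inU_gauss.
move=> [B' gB' eB]; exists B' => //; split => //.
apply: (mulfI q0); rewrite mulrCA -eB e; ring.
Qed.

Lemma split_step q k A B c R : gprime q -> gaussInt A -> gaussInt B -> gaussInt R -> inU c ->
  gcop A B -> A * B = c * (q ^+ (2 * k) * R) ->
  exists (b : bool) A' B', [/\ gaussInt A', gaussInt B', gcop A' B', A' * B' = c * R &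
     B = (if b then q ^+ k else 1) ^+ 2 * B'].
Proof.
move=> pq gA gB gR uc cop e.
case: k e => [|k] e.
  by exists true, A, B; split => //; rewrite ?expr1n ?mul1r // e expr0 mul1r.
have qAB : gdvd q (A * B).
  rewrite e mulrCA; apply: gdvd_mulr; first by apply: gauss_mul => //; apply: inU_gauss.
  rewrite mulnS exprS; apply: gdvd_mul2.
  by apply: gauss_exp; apply: gprime_gauss.
have sq : (q ^+ k.+1) ^+ 2 = q ^+ (2 * k.+1) by rewrite -exprM mulnC.
case: (euclid pq gA gB qAB) => [qA|qB].
- have e2 : B * A = c * (q ^+ (2 * k.+1) * R) by rewrite mulrC.
  have [A' gA' [eA e']] := absorb pq gB gA gR uc (gcop_sym cop) qA e2.
  exists false, A', B; split => //; rewrite ?expr1n ?mul1r //.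
    apply: gcop_sym; apply: (gcop_dvdr (gcop_sym cop)); rewrite eA; exact/gdvd_mull/gdvd_refl/gauss_exp/gprime_gauss.
  by rewrite mulrC.
- have [B' gB' [eB e']] := absorb pq gA gB gR uc cop qB e.
  exists true, A, B'; split => //; last by rewrite sq.
  apply: (gcop_dvdr cop); rewrite eB; exact/gdvd_mull/gdvd_refl/gauss_exp/gprime_gauss.
Qed.

Lemma gcop_unit A B c : gaussInt A -> gaussInt B -> inU c -> A * B = c -> inU B.
Proof.
move=> gA gB uc e; have [c' uc' e'] := inU_inv uc.
apply: (@unit_mul1 _ (A * c')) => //; first by apply: gauss_mul => //; apply: inU_gauss.
by rewrite mulrA [B * A]mulrC e.
Qed.

Lemma split_list (ps : seq algC) (es : seq nat) (r : seq nat) A B c :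
  (forall j, j \in r -> gprime ps`_j) -> uniq r -> gaussInt A -> gaussInt B -> inU c ->
  gcop A B -> A * B = c * \prod_(j <- r) ps`_j ^+ (2 * nth 0%N es j) ->
  exists m : nat -> bool, exists2 u, inU u &
    B = u * (\prod_(j <- r) (if m j then ps`_j ^+ nth 0%N es j else 1)) ^+ 2.
Proof.
elim: r A B => [|h r IH] A B hp ur gA gB uc cop e.
  exists (fun _ => true), B; last by rewrite big_nil expr1n mulr1.
  by apply: (gcop_unit gA gB uc); rewrite e big_nil mulr1.
move: ur => /= /andP[hr ur].
have gR : gaussInt (\prod_(j <- r) ps`_j ^+ (2 * nth 0%N es j)).
  rewrite big_seq; apply: gauss_prod => i ir; apply: gauss_exp; apply: gprime_gauss; apply: hp.
  by rewrite inE ir orbT.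
rewrite big_cons in e.
have ph : gprime ps`_h by apply: hp; rewrite inE eqxx.
have [b [A' [B' [gA' gB' cop' e' eB]]]] := split_step ph gA gB gR uc cop e.
have [|m [u uu eB']] := IH A' B' _ ur gA' gB' uc cop' e'.
  by move=> j jr; apply: hp; rewrite inE jr orbT.
exists (fun j => if j == h then b else m j), u => //.
rewrite big_cons eqxx eB eB'.
have E : \prod_(j <- r) (if (if j == h then b else m j) then ps`_j ^+ nth 0%N es j else 1)
   = \prod_(j <- r) (if m j then ps`_j ^+ nth 0%N es j else 1).
  apply: eq_big_seq => j jr.
  by have /negbTE -> : j != h by apply: contraNneq hr => <-.
rewrite E.
clear E; case: b {eB}; rewrite ?mul1r ?expr1n; ring.
Qed.

Lemma prod2 (n1 n2 : int) : n1 * n2 = 2 -> 0 <= n1 -> 0 <= n2 -> n1 = 1 \/ n2 = 1.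
Proof.
move=> h p1 p2.
have q1 : n1 != 0 by apply/eqP=> e; move: h; rewrite e mul0r.
have q2 : n2 != 0 by apply/eqP=> e; move: h; rewrite e mulr0.
nia.
Qed.

Lemma gi_unit_forms u : inU u -> exists a b, u = gi a b /\ a ^+ 2 + b ^+ 2 = 1.
Proof.
case/inU_cases=> ->.
- by exists 1, 0; rewrite gi1.
- by exists (-1), 0; rewrite -gi1 gi_opp oppr0.
- by exists 0, 1; rewrite giI.
- by exists 0, (-1); rewrite -giI gi_opp oppr0.
Qed.

Lemma gprime_1i : gprime (1 + 'i).
Proof.
have e11 : 1 + 'i = gi 1 1 by rewrite /gi mulr1.
split.
- by apply/gaussP; exists 1, 1.
- by rewrite e11 -gi0; apply/eqP => /gi_inj[].
- apply/negP => /gi_unit_forms [a [b [e n1]]].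
  by move: e; rewrite e11 => /gi_inj [ea eb]; move: n1; rewrite -ea -eb; lia.
- move=> x y /gaussP[a [b ->]] /gaussP[c [d ->]]; rewrite e11 gi_mul => /gi_inj[h1 h2].
  have h : (a ^+ 2 + b ^+ 2) * (c ^+ 2 + d ^+ 2) = 2.
    by rewrite -[2](_ : 1 ^+ 2 + 1 ^+ 2 = 2) // {1}h1 h2; ring.
  case: (prod2 h (sq_ge0 _ _) (sq_ge0 _ _)) => hn; [left|right]; exact: norm1_unit.
Qed.

Lemma div_int (x : int) (n : nat) : (n != 0)%N -> (x%:~R : algC) / n%:R \is a Num.int ->
  exists k : int, x = k * n%:Z.
Proof.
move=> n0 /intrP[k ek]; exists k; apply: (@intr_inj algC).
have nz : (n%:R : algC) != 0 by rewrite pnatr_eq0.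
by rewrite rmorphM /= -ek divfK // -pmulrn.
Qed.

Lemma inOI_gi a b : inOI (gi a b) -> exists k l, a = 4 * k + 1 /\ b = 2 * l.
Proof.
move=> /andP[/andP[_ h2] h4]; rewrite Re_gi Im_gi in h2 h4.
have h4' : ((a - 1)%:~R : algC) / 4%:R \is a Num.int by rewrite rmorphB.
have h2' : ((a + b - 1)%:~R : algC) / 2%:R \is a Num.int by rewrite rmorphB rmorphD.
have [k ek] := @div_int (a - 1) 4 isT h4'.
have [m em] := @div_int (a + b - 1) 2 isT h2'.
exists k, (m - 2 * k); split; lia.
Qed.

Lemma sq1i : (1 + 'i) ^+ 2 = 2 * 'i :> algC.
Proof. by rewrite expr2 mulrDl !mulrDr sqrI; ring. Qed.

Lemma unit_pow u : inU u -> exists2 t, (t <= 3)%N & u = 'i ^+ t.+1.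
Proof.
have i4 : 'i ^+ 4 = 1 :> algC by rewrite (exprM _ 2 2) sqrCi expr2 mulrNN mulr1.
case/inU_cases=> ->.
- by exists 3%N.
- by exists 1%N; rewrite // sqrCi.
- by exists 0%N; rewrite // expr1.
- by exists 2%N; rewrite // exprS sqrCi mulrN1.
Qed.

Lemma sign_rel (t : nat) : ('i ^+ t.+1) ^+ 2 * (-1) ^+ t = -1 :> algC.
Proof.
rewrite exprAC sqrCi -exprD addSn addnn exprS -mul2n exprM sqrrN expr1n expr1n mulr1 //.
Qed.
Unset Implicit Arguments. Set Strict Implicit.
Theorem theorem4p11 (X Y Z : algC) :
  gaussInt X -> gaussInt Y -> gaussInt Z ->
  X ^+ 2 + 'i * Y ^+ 2 = Z ^+ 2 ->
  gcd_unit X Y ->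
  X * Y * Z != 0 ->
  inOI X -> inOI Z ->
  (exists2 W : algC, inG W & Y = (1 + 'i) ^+ 2 * W) ->
  exists (t : nat) (P Q : algC),
    [/\ (t <= 3)%N, inG P, inG Q, gcoprime P Q &
        [/\         X = 'i ^+ t.+1 * (P ^+ 2 - (-1) ^+ t * 'i * Q ^+ 2),
        Y = (1 + 'i) ^+ 2 * P * Q &
        Z = 'i ^+ t.+1 * (P ^+ 2 + (-1) ^+ t * 'i * Q ^+ 2)]].
Proof.
move=> gX gY gZ eq gXY nz oX oZ [W gW eY].
have /gaussP[x0 [x1 hX]] := gX; have /gaussP[z0 [z1 hZ]] := gZ.
have [k [l [ex0 ex1]]] : exists k l, x0 = 4 * k + 1 /\ x1 = 2 * l by apply: inOI_gi; rewrite -hX.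
have [k' [l' [ez0 ez1]]] : exists k l, z0 = 4 * k + 1 /\ z1 = 2 * l by apply: inOI_gi; rewrite -hZ.
pose A := gi (2 * (k' - k)) (l' - l); pose B := gi (2 * (k + k') + 1) (l + l').
have gA : gaussInt A by apply/gaussP; do 2 eexists.
have gB : gaussInt B by apply/gaussP; do 2 eexists.
have eX : X = B - A.
  by rewrite hX /A /B gi_opp gi_add; congr gi; lia.
have eZ : Z = A + B by rewrite hZ /A /B gi_add; congr gi; lia.
have eAB : A * B = - 'i * W ^+ 2.
  have e1 : 'i * Y ^+ 2 = - 4 * ('i * W ^+ 2).
    by rewrite eY sq1i !exprMn sqrCi; ring.
  have e2 : A * B * 4 = (A + B) ^+ 2 - (B - A) ^+ 2 by ring.
  apply: (@mulIf _ 4); first by rewrite pnatr_eq0.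
  by rewrite e2 -eZ -eX -eq e1; ring.
have uI : inU 'i by rewrite /inU !inE eqxx !orbT.
have uc : inU (- 'i) by rewrite /inU !inE eqxx !orbT.
have cop : gcop A B.
  move=> p pp pA pB.
  have pX : gdvd p X by rewrite eX; apply: gdvd_sub.
  have pZ : gdvd p Z by rewrite eZ; apply: gdvd_add.
  have e3 : 'i * (Y * Y) = Z * Z - X * X by rewrite -!expr2 -eq; ring.
  have pY2 : gdvd p ('i * (Y * Y)) by rewrite e3; apply: gdvd_sub; apply: gdvd_mulr.
  have gYY : gaussInt (Y * Y) by apply: gauss_mul.
  have pY : gdvd p Y.
    case: (euclid pp gaussI gYY pY2) => [pI|pYY]; first by case: (gprime_ndvd_unit pp uI).
    by case: (euclid pp gY gY pYY).
  have := gXY p (gprime_gauss pp) pX pY; case: pp => _ _ /negP; done.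
have Y0 : Y != 0 by apply: contraNneq nz => ->; rewrite mulr0 mul0r.
have W0 : W != 0 by apply: contraNneq Y0 => W0; rewrite eY W0 mulr0.
case: gW => a [ps [es [hs hu hp hW]]].
set n := size ps in hs hW.
pose R := \prod_(j <- index_iota 0 n) ps`_j ^+ (2 * nth 0%N es j).
have hW2 : W ^+ 2 = (1 + 'i) ^+ (2 * a) * R.
  rewrite hW exprMn -exprM mulnC; congr (_ * _).
  by rewrite /R big_mkord -prodrXl; apply: eq_bigr => j _; rewrite -exprM mulnC.
have hps : forall j, j \in index_iota 0 n -> gprime ps`_j.
  by move=> j; rewrite mem_index_iota => /andP[_ jn]; exact: (hp _ (mem_nth 0 jn)).1.
have gR : gaussInt R.
  rewrite /R big_seq; apply: gauss_prod => j jr; apply: gauss_exp; apply: gprime_gauss; exact: hps.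
have eAB' : A * B = - 'i * ((1 + 'i) ^+ (2 * a) * R) by rewrite eAB hW2.
have [b [A' [B' [gA' gB' cop' e' eB]]]] := split_step gprime_1i gA gB gR uc cop eAB'.
have ur : uniq (index_iota 0 n) by rewrite /index_iota iota_uniq.
have [m [u uu eB']] := split_list hps ur gA' gB' uc cop' e'.
pose eP := mkseq (fun j => if m j then nth 0%N es j else 0%N) n.
pose eQ := mkseq (fun j => if m j then 0%N else nth 0%N es j) n.
pose P := (1 + 'i) ^+ (if b then a else 0%N) * \prod_(j < n) ps`_j ^+ nth 0%N eP j.
pose Q := (1 + 'i) ^+ (if b then 0%N else a) * \prod_(j < n) ps`_j ^+ nth 0%N eQ j.
have hPi : P = (if b then (1 + 'i) ^+ a else 1) *
    \prod_(j <- index_iota 0 n) (if m j then ps`_j ^+ nth 0%N es j else 1).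
  rewrite /P big_mkord; congr (_ * _); first by case: (b).
  apply: eq_bigr => j _; rewrite /eP nth_mkseq ?ltn_ord //.
  by case: (m j).
have hB : B = u * P ^+ 2.
  by rewrite eB eB' hPi exprMn mulrCA.
have hPQ : P * Q = W.
  rewrite hW /P /Q mulrACA -exprD; congr (_ * _); first by case: (b); rewrite ?addn0.
  rewrite -big_split /=; apply: eq_bigr => j _; rewrite /eP /eQ !nth_mkseq ?ltn_ord //.
  by case: (m j); rewrite ?expr0 ?mulr1 ?mul1r.
have gpj : forall j : 'I_n, gaussInt ps`_j.
  by move=> j; apply: gprime_gauss; exact: (hp _ (mem_nth 0 (ltn_ord j))).1.
have g1i : gaussInt (1 + 'i) by apply: gauss_add; [exact: gauss1|exact: gaussI].
have gP : gaussInt P.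
  by apply: gauss_mul; [exact: gauss_exp|apply: gauss_prod => j _; exact: gauss_exp].
have gQ : gaussInt Q.
  by apply: gauss_mul; [exact: gauss_exp|apply: gauss_prod => j _; exact: gauss_exp].
have P0 : P != 0 by apply: contraNneq W0 => P0; rewrite -hPQ P0 mul0r.
have hA : A * u = - 'i * Q ^+ 2.
  apply: (@mulIf _ (P ^+ 2)); first by rewrite expf_neq0.
  by rewrite -mulrA -hB eAB -hPQ; ring.
have [t ht eu] := unit_pow uu.
have hA2 : A = u * (-1) ^+ t * 'i * Q ^+ 2.
  have sr := sign_rel t; rewrite -eu in sr.
  have -> : A = - (A * (u ^+ 2 * (-1) ^+ t)) by rewrite sr; ring.
  rewrite (_ : A * (u ^+ 2 * (-1) ^+ t) = (A * u) * (u * (-1) ^+ t)); last by ring.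
  by rewrite hA; ring.
exists t, P, Q; split => //.
- exists (if b then a else 0%N), ps, eP; split => //; by rewrite size_mkseq.
- exists (if b then 0%N else a), ps, eQ; split => //; by rewrite size_mkseq.
- move=> p pp [pP pQ].
  have gu : gaussInt (u * (-1) ^+ t * 'i).
    apply: gauss_mul; last exact: gaussI.
    by apply: gauss_mul; [exact: inU_gauss|apply: gauss_exp; apply: gauss_opp; exact: gauss1].
  have pB : gdvd p B.
    by rewrite hB; apply: gdvd_mull; [exact: inU_gauss|rewrite expr2; exact: gdvd_mulr].
  have pA : gdvd p A.
    by rewrite hA2; apply: gdvd_mull => //; rewrite expr2; exact: gdvd_mulr.
  have pX : gdvd p X by rewrite eX; apply: gdvd_sub.
  have pY : gdvd p Y.
    by rewrite eY -hPQ; apply: gdvd_mull; [exact: gauss_exp|exact: gdvd_mulr].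
  have := gXY p (gprime_gauss pp) pX pY; case: pp => _ _ /negP; done.
- split.
  + by rewrite eX hB hA2 eu; ring.
  + by rewrite eY -hPQ mulrA.
  + by rewrite eZ hB hA2 eu; ring.
Qed.
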